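(* Suppose $\hat{e}(X_i) \in (0, 1)$ for all $i$, let $\hat{\gamma}$ minimize $\mathcal{L}_n(\gamma) := \mathbb{P}_n \rho_{\tau}(Y - \gamma^{\top} g(X)) Z \tfrac{1 - \hat{e}(X)}{\hat{e}(X)}$ and let $\hat{V}_i = \textup{sign}(Y_i - \hat{\gamma}^{\top} g(X_i))$. Then the optimal objective value of the optimization problem \begin{align*} \max_{\bar{e} \in \mathcal{E}_n(\Lambda)} \frac{\mathbb{P}_n YZ/\bar{e}}{\mathbb{P}_n Z/\hat{e}(X)} \quad \text{subject to} \quad \mathbb{P}_n g(X) Z / \bar{e} = \mathbb{P}_n g(X) Z / \hat{e}(X) \end{align*} is: \begin{align*} \frac{\mathbb{P}_n(Y - \hat{\gamma}^{\top} g(X)) Z(1 + \Lambda^{\hat{V}}(1-\hat{e}(X))/\hat{e}(X)) + \mathbb{P}_n \hat{\gamma}^{\top} g(X) Z / \hat{e}(X)}{\mathbb{P}_n Z / \hat{e}(X)}. \end{align*}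
   Context: We observe i.i.d. samples $(X_i, Y_i, Z_i)$, $i = 1, \dots, n$, with covariates $X_i \in \mathcal{X} \subseteq \mathbb{R}^d$, binary treatment $Z_i \in \{0,1\}$ and real outcome $Y_i$. $\hat{e}(x)$ is an estimate of the nominal propensity score $e(x) = P(Z=1 \mid X=x)$. $\Lambda \geq 1$ is fixed and $\tau = \Lambda/(\Lambda+1)$. $\mathbb{P}_n[\cdot]$ denotes the average $\tfrac{1}{n}\sum_{i=1}^n[\cdot]_i$ (for a vector $v$, $\mathbb{P}_n v = \tfrac1n\sum_i v_i$). The constraint set is $\mathcal{E}_n(\Lambda) = \{ \bar{e} \in \mathbb{R}^n : \Lambda^{-1} \leq \frac{\bar{e}_i/(1-\bar{e}_i)}{\hat{e}(X_i)/(1-\hat{e}(X_i))} \leq \Lambda \text{ for all } i \}$. $g : \mathcal{X} \to \mathbb{R}^k$ is a function containing an ``intercept'' (constant component), e.g. $g(x) = (1, \hat{Q}_\tau(x,1))$ with $\hat{Q}_\tau$ an estimated conditional quantile of $Y$. $\rho_{\tau}(u) = u(\tau - \mathbb{I}\{u < 0\})$ is the quantile regression check function. *)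

(* Defs.v *)
From HB Require Import structures.
From mathcomp Require Import all_boot all_order all_algebra.
From mathcomp Require Import reals.
Set Implicit Arguments. Unset Strict Implicit. Unset Printing Implicit Defensive.
Import Order.TTheory GRing.Theory Num.Theory.
Local Open Scope ring_scope.

Section Defs.
Variable R : realType.

Definition Pn (n : nat) (f : 'I_n -> R) : R := (\sum_(i < n) f i) / n%:R.

Definition rho (tau u : R) : R := u * (tau - ((u < 0)%R : bool)%:R).

Definition odds (e : R) : R := e / (1 - e).

Definition dotk (k : nat) (gam v : 'rV[R]_k) : R := \sum_(j < k) gam 0 j * v 0 j.

Definition En (n : nat) (Lam : R) (eh : 'I_n -> R) (ebar : 'I_n -> R) : Prop :=
  forall i, Lam^-1 <= odds (ebar i) / odds (eh i) <= Lam.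
End Defs.

(* Main.v *)
Require Import Defs.
From HB Require Import structures.
From mathcomp Require Import all_boot all_order all_algebra.
From mathcomp Require Import reals classical_sets.
From mathcomp Require Import ring lra.
Import Order.TTheory GRing.Theory Num.Theory.
Local Open Scope ring_scope.

Section F.
Variable R : realType.
Variable k : nat.
Implicit Types (d c w : 'rV[R]_k).

Lemma dotkDr d c w : dotk d (c + w) = dotk d c + dotk d w.
Proof. by rewrite /dotk -big_split /=; apply: eq_bigr => j _; rewrite mxE mulrDr. Qed.
Lemma dotkZr d c (a : R) : dotk d (a *: c) = a * dotk d c.
Proof. by rewrite /dotk mulr_sumr; apply: eq_bigr => j _; rewrite mxE mulrCA. Qed.
Lemma dotkNr d c : dotk d (- c) = - dotk d c.
Proof. by rewrite -scaleN1r dotkZr mulN1r. Qed.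
Lemma dotkDl d c w : dotk (d + c) w = dotk d w + dotk c w.
Proof. by rewrite /dotk -big_split /=; apply: eq_bigr => j _; rewrite mxE mulrDl. Qed.
Lemma dotkZl d c (a : R) : dotk (a *: d) c = a * dotk d c.
Proof. by rewrite /dotk mulr_sumr; apply: eq_bigr => j _; rewrite mxE mulrA. Qed.
Lemma dotkNl d c : dotk (- d) c = - dotk d c.
Proof. by rewrite -scaleN1r dotkZl mulN1r. Qed.
Lemma dotk_sumr (I : finType) (P : pred I) d (F : I -> 'rV[R]_k) :
  dotk d (\sum_(i | P i) F i) = \sum_(i | P i) dotk d (F i).
Proof.
rewrite /dotk exchange_big /=; apply: eq_bigr => j _.
by rewrite summxE mulr_sumr.
Qed.
Lemma dotk0r d : dotk d 0 = 0.
Proof. by rewrite /dotk big1 // => j _; rewrite mxE mulr0. Qed.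
Lemma dotk_self0 c : dotk c c <= 0 -> c = 0.
Proof.
move=> h.
have h0 : dotk c c = 0.
  apply/eqP; rewrite eq_le h /= /dotk sumr_ge0 // => j _; exact: sqr_ge0.
apply/matrixP => i j; rewrite mxE (ord1 i).
have := @psumr_eq0P _ _ xpredT (fun j => c 0 j * c 0 j) (fun l _ => sqr_ge0 (c 0 l)) h0 j isT.
by move/eqP; rewrite mulf_eq0 orbb => /eqP.
Qed.

Definition hsum {I : finType} (S : {set I}) (v : I -> 'rV[R]_k) (a b : I -> R) d :=
  \sum_(i in S) Num.max (a i * dotk d (v i)) (b i * dotk d (v i)).

Lemma hsum_sub {I : finType} (S : {set I}) v a b d1 d2 (al be : R) :
  0 <= al -> 0 <= be ->
  hsum S v a b (al *: d1 + be *: d2) <= al * hsum S v a b d1 + be * hsum S v a b d2.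
Proof.
move=> ha hb; rewrite /hsum !mulr_sumr -big_split /=; apply: ler_sum => i _.
rewrite dotkDl !dotkZl.
set x := dotk d1 (v i); set y := dotk d2 (v i).
have m1 := le_max (a i * x) (a i * x) (b i * x); rewrite lexx /= in m1.
have m2 := le_max (b i * x) (a i * x) (b i * x); rewrite lexx orbT in m2.
have m3 := le_max (a i * y) (a i * y) (b i * y); rewrite lexx /= in m3.
have m4 := le_max (b i * y) (a i * y) (b i * y); rewrite lexx orbT in m4.
move: (Num.max (a i * x) _) m1 m2 => M1 m1 m2.
move: (Num.max (a i * y) _) m3 m4 => M2 m3 m4.
rewrite ge_max; apply/andP; split; nra.
Qed.

Lemma farkas (I : finType) (v : I -> 'rV[R]_k) (a b : I -> R) :
  (forall i, a i <= b i) ->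
  forall N (S : {set I}) c, #|S| = N ->
  (forall d, dotk d c <= hsum S v a b d) ->
  exists s : I -> R, (forall i, a i <= s i <= b i) /\ c = \sum_(i in S) s i *: v i.
Proof.
move=> hab; elim=> [|N IH] S c hS hc.
  have S0 := cards0_eq hS; subst S.
  exists a; split; first by move=> i; rewrite lexx hab.
  rewrite big_set0; apply: dotk_self0; have := hc c; by rewrite /hsum big_set0.
have : S != finset.set0 by apply/eqP => S0; rewrite S0 cards0 in hS.
case/set0Pn => x xS.
have hS' : #|S :\ x| = N by move: hS; rewrite (cardsD1 x) xS add1n => -[].
pose f d := dotk d c - hsum (S :\ x) v a b d.
pose w := v x.
have hf : forall d, f d <= Num.max (a x * dotk d w) (b x * dotk d w).
  move=> d; have := hc d; rewrite /f /hsum (big_setD1 x xS) /=; lra.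
have fsup : forall d1 d2 (al be : R), 0 <= al -> 0 <= be ->
    al * f d1 + be * f d2 <= f (al *: d1 + be *: d2).
  move=> d1 d2 al be ha hb; rewrite /f dotkDl !dotkZl.
  have := @hsum_sub _ (S :\ x) v a b d1 d2 al be ha hb; rewrite /hsum; lra.
pose E := fun y : R => y = a x \/ exists d, 0 < dotk d w /\ y = f d / dotk d w.
have Eub : forall d, dotk d w < 0 -> forall y, E y -> y <= f d / dotk d w.
  move=> d dn y [->|[d1 [dp ->]]].
    have := hf d; rewrite max_l; last by rewrite ler_wnM2r ?hab // ltW.
    by move=> h; rewrite ler_ndivlMr.
  have := fsup d1 d (- dotk d w) (dotk d1 w) _ _.
  rewrite oppr_ge0 (ltW dn) (ltW dp) => /(_ isT isT).
  have := hf (- dotk d w *: d1 + dotk d1 w *: d).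
  rewrite dotkDl !dotkZl.
  have -> : - dotk d w * dotk d1 w + dotk d1 w * dotk d w = 0 by rewrite mulrC; lra.
  rewrite !mulr0 maxxx => h1 h2.
  have h3 : - dotk d w * f d1 + dotk d1 w * f d <= 0 by apply: le_trans h1.
  rewrite ler_ndivlMr // mulrAC ler_pdivlMr //.
  nra.
have Eb : forall y, E y -> y <= b x.
  move=> y [->|[d1 [dp ->]]]; first exact: hab.
  have := hf d1; rewrite max_r; last by rewrite ler_wpM2r ?hab // ltW.
  by move=> h; rewrite ler_pdivrMr.
have Ene : (E !=set0)%classic by exists (a x); left.
have Esup : has_sup E by split => //; exists (b x) => y; exact: Eb.
pose sg := sup E.
have sga : a x <= sg by apply: sup_upper_bound => //; left.
have sgb : sg <= b x by apply: ge_sup => // y; exact: Eb.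
have hc' : forall d, dotk d (c - sg *: w) <= hsum (S :\ x) v a b d.
  move=> d; rewrite dotkDr dotkNr dotkZr.
  suff : f d <= sg * dotk d w by rewrite /f; lra.
  have [dn|dp|d0] := ltgtP (dotk d w) 0.
  - have : sg <= f d / dotk d w by apply: ge_sup => // y; exact: Eub.
    by rewrite ler_ndivlMr.
  - have : f d / dotk d w <= sg.
      by apply: sup_upper_bound => //; right; exists d.
    by rewrite ler_pdivrMr.
  - by have := hf d; rewrite d0 !mulr0 maxxx.
have [s [hs hcs]] := IH (S :\ x) (c - sg *: w) hS' hc'.
exists (fun i => if i == x then sg else s i); split.
  by move=> i; case: eqP => [->|_] //; rewrite sga sgb.
rewrite (big_setD1 x xS) /= eqxx.
have -> : \sum_(i in S :\ x) (if i == x then sg else s i) *: v i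
          = \sum_(i in S :\ x) s i *: v i.
  apply: eq_bigr => i; rewrite !inE => /andP [/negPf -> _] //.
by rewrite -hcs addrC subrK.
Qed.
End F.

Section P.
Variable R : realType.
Variable n : nat.
Implicit Types f g : 'I_n -> R.

Lemma Pn_ext f g : (forall i, f i = g i) -> Pn f = Pn g.
Proof. by move=> h; rewrite /Pn; congr (_ / _); apply: eq_bigr => i _; exact: h. Qed.
Lemma PnD f g : Pn (fun i => f i + g i) = Pn f + Pn g.
Proof. by rewrite /Pn big_split /= mulrDl. Qed.
Lemma PnZ (a : R) f : Pn (fun i => a * f i) = a * Pn f.
Proof. by rewrite /Pn -mulr_sumr mulrA. Qed.
Lemma Pn_le f g : (forall i, f i <= g i) -> Pn f <= Pn g.
Proof.
move=> h; rewrite /Pn ler_wpM2r ?invr_ge0 ?ler0n //; apply: ler_sum => i _; exact: h.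
Qed.
Lemma Pn_ge0 f : (forall i, 0 <= f i) -> 0 <= Pn f.
Proof. move=> h; rewrite /Pn mulr_ge0 ?invr_ge0 ?ler0n // sumr_ge0 // => i _; exact: h. Qed.
Lemma Pn_sum (k : nat) (F : 'I_n -> 'I_k -> R) :
  Pn (fun i => \sum_(j < k) F i j) = \sum_(j < k) Pn (fun i => F i j).
Proof. by rewrite /Pn exchange_big /= mulr_suml. Qed.
Lemma Pn_sum0 f : \sum_i f i = 0 -> Pn f = 0.
Proof. by rewrite /Pn => ->; rewrite mul0r. Qed.
Lemma Pn_ge0_sum f : 0 <= Pn f -> 0 <= \sum_i f i.
Proof.
rewrite /Pn; case: (posnP n) => [n0|np].
  by move=> _; rewrite big1 // => i; have := ltn_ord i; rewrite {2}n0.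
by rewrite pmulr_lge0 // invr_gt0 ltr0n.
Qed.
End P.

Theorem proposition6 (R : realType) (n d k : nat)
  (X : 'I_n -> 'rV[R]_d) (Y : 'I_n -> R) (Z : 'I_n -> bool)
  (ehat : 'rV[R]_d -> R) (g : 'rV[R]_d -> 'rV[R]_k) (Lam : R)
  (hLam : 1 <= Lam)
  (hint : exists (j : 'I_k) (c : R), c != 0 /\ forall x, g x 0 j = c)
  (he : forall i, 0 < ehat (X i) < 1)
  (ghat : 'rV[R]_k)
  (hmin : forall gam : 'rV[R]_k,
     Pn (fun i => rho (Lam / (Lam + 1)) (Y i - dotk ghat (g (X i))) * (Z i)%:R
                   * (1 - ehat (X i)) / ehat (X i))
     <= Pn (fun i => rho (Lam / (Lam + 1)) (Y i - dotk gam (g (X i))) * (Z i)%:R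
                   * (1 - ehat (X i)) / ehat (X i))) :
  let eh := fun i => ehat (X i) in
  let obj := fun ebar : 'I_n -> R =>
    Pn (fun i => Y i * (Z i)%:R / ebar i) / Pn (fun i => (Z i)%:R / eh i) in
  let feasible := fun ebar : 'I_n -> R =>
    En Lam eh ebar /\
    forall j : 'I_k, Pn (fun i => g (X i) 0 j * (Z i)%:R / ebar i)
                   = Pn (fun i => g (X i) 0 j * (Z i)%:R / eh i) in
  let value :=
    (Pn (fun i => (Y i - dotk ghat (g (X i))) * (Z i)%:R
          * (1 + Lam ^ (sgz (Y i - dotk ghat (g (X i)))) * (1 - eh i) / eh i))
     + Pn (fun i => dotk ghat (g (X i)) * (Z i)%:R / eh i))
    / Pn (fun i => (Z i)%:R / eh i) in
  (exists2 ebar, feasible ebar & obj ebar = value) /\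
  (forall ebar, feasible ebar -> obj ebar <= value).
Proof.
move=> eh obj feasible value.
set tau := Lam / (Lam + 1).
have Lpos : 0 < Lam by apply: lt_le_trans hLam.
have Lne : Lam != 0 by rewrite gt_eqF.
have L1ne : Lam + 1 != 0 by rewrite gt_eqF // ltr_wpDr.
have Linv_le : Lam^-1 <= Lam.
  by apply: le_trans (hLam); rewrite invr_le1 // unitfE.
have Linv_pos : 0 < Lam^-1 by rewrite invr_gt0.
have ehp : forall i, 0 < eh i by move=> i; case/andP: (he i).
have eh1 : forall i, eh i < 1 by move=> i; case/andP: (he i).
pose r i := (1 - eh i) / eh i.
have rpos : forall i, 0 < r i by move=> i; rewrite /r divr_gt0 // ?subr_gt0.
pose G i := g (X i).
pose u i := Y i - dotk ghat (G i).
pose z i := (Z i)%:R : R.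
have z0 : forall i, 0 <= z i by move=> i; rewrite /z ler0n.
have gpart0 : forall e : 'I_n -> R,
    Pn (fun i => dotk ghat (G i) * (Z i)%:R / e i)
    = \sum_(j < k) ghat 0 j * Pn (fun i => G i 0 j * (Z i)%:R / e i).
  move=> e; rewrite (eq_bigr (fun j => Pn (fun i => ghat 0 j * (G i 0 j * (Z i)%:R / e i)))); last by move=> j _; rewrite PnZ.
  rewrite -Pn_sum; apply: Pn_ext => i.
  rewrite /dotk !mulr_suml; apply: eq_bigr => j _; by rewrite !mulrA.
have gpart : forall e : 'I_n -> R,
    (forall j, Pn (fun i => G i 0 j * (Z i)%:R / e i) = Pn (fun i => G i 0 j * (Z i)%:R / eh i)) ->
    Pn (fun i => dotk ghat (G i) * (Z i)%:R / e i) = Pn (fun i => dotk ghat (G i) * (Z i)%:R / eh i).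
  move=> e he'; rewrite !gpart0; apply: eq_bigr => j _; by rewrite he'.
have red : forall e : 'I_n -> R,
    Pn (fun i => Y i * (Z i)%:R / e i)
    = Pn (fun i => u i * (Z i)%:R / e i) + Pn (fun i => dotk ghat (G i) * (Z i)%:R / e i).
  move=> e; rewrite -PnD; apply: Pn_ext => i; rewrite /u; ring.
have D0 : 0 <= (Pn (fun i => (Z i)%:R / eh i))^-1.
  by rewrite invr_ge0 Pn_ge0 // => i; rewrite divr_ge0 // ?ler0n // ltW.
split; last first.
  move=> e [hEn hcon]; rewrite /obj /value ler_wpM2r // red (gpart e hcon) lerD2r.
  apply: Pn_le => i.
  move: (hEn i); rewrite /odds => /andP [hq1 hq2].
  set q := (e i / (1 - e i)) / (eh i / (1 - eh i)) in hq1 hq2.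
  have qpos : 0 < q by apply: lt_le_trans hq1.
  have e0 : e i != 0.
    by apply/eqP => h; move: qpos; rewrite /q h !mul0r ltxx.
  have e1 : 1 - e i != 0.
    by apply/eqP => h; move: qpos; rewrite /q h invr0 mulr0 mul0r ltxx.
  have ehne : eh i != 0 by rewrite gt_eqF.
  have eh1ne : 1 - eh i != 0 by rewrite gt_eqF // subr_gt0.
  have einv : (e i)^-1 = 1 + q^-1 * r i by rewrite /q /r; field; rewrite ehne eh1ne e0 e1.
  have E1 : forall c, c * (1 - eh i) / eh i = c * r i by move=> c; rewrite /r mulrA.
  have key : u i * (Z i)%:R / e i <= u i * (Z i)%:R * (1 + Lam ^ sgz (u i) * (1 - eh i) / eh i).
    rewrite einv E1.
    have [un|up|u0] := ltgtP (u i) 0.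
    - rewrite ltr0_sgz // exprN1.
      have hh : Lam^-1 <= q^-1 by rewrite lef_pV2 ?posrE.
      have hP : u i * (Z i)%:R * r i <= 0.
        rewrite -mulrA; apply: mulr_le0_ge0; first exact: ltW.
        by apply: mulr_ge0; [exact: z0 | exact: ltW (rpos i)].
      nra.
    - rewrite gtr0_sgz // expr1z.
      have hh : q^-1 <= Lam by rewrite -(invrK Lam) lef_pV2 ?posrE // invr_gt0.
      have hP : 0 <= u i * (Z i)%:R * r i.
        by apply: mulr_ge0; [apply: mulr_ge0; [exact: ltW | exact: z0] | exact: ltW (rpos i)].
      nra.
    - by rewrite u0 !mul0r.
  exact: key.
pose a i := if 0 < u i then tau else tau - 1.
pose b i := if u i < 0 then tau - 1 else tau.
pose v i := (z i * r i) *: G i.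
have tau1 : tau - 1 <= tau by lra.
have hab : forall i, a i <= b i.
  move=> i; rewrite /a /b.
  have [un|up|u0] := ltgtP (u i) 0.
  - by [].
  - by [].
  - by [].
have hyp : forall dl, dotk dl 0 <= @hsum R k _ [set: 'I_n] v a b dl.
  move=> dl; rewrite dotk0r.
  pose x i := dotk dl (G i).
  pose K := 1 + \sum_i `|x i| / `|u i|.
  have Kpos : 0 < K.
    rewrite /K ltr_pwDl // sumr_ge0 // => i _; by rewrite divr_ge0.
  pose t := K^-1.
  have tpos : 0 < t by rewrite invr_gt0.
  have tx : forall i, u i != 0 -> t * `|x i| < `|u i|.
    move=> i ui.
    have hK : `|x i| / `|u i| < K.
      rewrite /K (bigD1 i) //=.
      have : 0 <= \sum_(j < n | j != i) `|x j| / `|u j|.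
        by rewrite sumr_ge0 // => j _; rewrite divr_ge0.
      lra.
    move: hK; rewrite ltr_pdivrMr ?normr_gt0 // => h.
    by rewrite /t mulrC ltr_pdivrMr // mulrC.
  pose gam := ghat - t *: dl.
  have pt : forall i,
      rho tau (Y i - dotk gam (g (X i))) * (Z i)%:R * (1 - ehat (X i)) / ehat (X i)
      = rho tau (Y i - dotk ghat (g (X i))) * (Z i)%:R * (1 - ehat (X i)) / ehat (X i)
        + t * Num.max (a i * dotk dl (v i)) (b i * dotk dl (v i)).
    move=> i.
    have -> : Y i - dotk gam (g (X i)) = u i + t * x i.
      by rewrite /gam dotkDl dotkNl dotkZl /u /x /G; ring.
    have -> : dotk dl (v i) = z i * r i * x i by rewrite /v dotkZr.
    have -> : Y i - dotk ghat (g (X i)) = u i by [].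
    have hx1 : x i <= `|x i| by exact: ler_norm.
    have hx2 : - x i <= `|x i| by rewrite -normrN ler_norm.
    have [un|up|u0] := ltgtP (u i) 0.
    - have := tx i (ltr0_neq0 un); rewrite (ltr0_norm un) => h.
      have h2 : u i + t * x i < 0 by nra.
      rewrite /rho /a /b h2 un (lt_gtF un) /= maxxx /r /z /eh /=; ring.
    - have := tx i (lt0r_neq0 up); rewrite (gtr0_norm up) => h.
      have h2 : 0 < u i + t * x i by nra.
      rewrite /rho /a /b (lt_gtF h2) up (lt_gtF up) /= maxxx /r /z /eh /=; ring.
    - have zr : 0 <= z i * r i by rewrite mulr_ge0 // ltW.
      rewrite u0 add0r /rho /a /b u0 ltxx /=.
      have [xn|xp] := ltP (x i) 0.
      + have h2 : t * x i < 0 by rewrite pmulr_rlt0.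
        have hP : z i * r i * x i <= 0 by rewrite mulr_ge0_le0 // ltW.
        rewrite h2 max_l; last by move: hP; set P := z i * r i * x i; rewrite mulrBl mul1r => hP; lra.
        rewrite /r /z /eh /=; ring.
      + have h2 : (t * x i < 0) = false by apply/negbTE; rewrite -leNgt mulr_ge0 // ltW.
        have hP : 0 <= z i * r i * x i by rewrite mulr_ge0.
        rewrite h2 max_r; last by move: hP; set P := z i * r i * x i; rewrite mulrBl mul1r => hP; lra.
        rewrite /r /z /eh /=; ring.
  have hg := hmin gam.
  rewrite -/tau (@Pn_ext _ _ _ _ pt) PnD PnZ in hg.
  have : 0 <= t * Pn (fun i => Num.max (a i * dotk dl (v i)) (b i * dotk dl (v i))) by lra.
  rewrite pmulr_rge0 // => /Pn_ge0_sum.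
  rewrite /hsum; congr (_ <= _); apply: eq_bigl => i; by rewrite inE.
have [s [hs hsum0]] := @farkas R k 'I_n v a b hab #|[set: 'I_n]| [set: 'I_n] 0 erefl hyp.
have sum0 : forall j, \sum_i (s i *: v i) 0 j = 0.
  move=> j; have := congr1 (fun M : 'rV[R]_k => M 0 j) hsum0.
  rewrite /= mxE summxE => h; rewrite [RHS]h.
  by apply: eq_bigl => i; rewrite inE.
have cL1 : (Lam - Lam^-1) * tau = Lam - 1 by rewrite /tau; field; rewrite ?Lne ?L1ne.
have cL2 : (Lam - Lam^-1) * (tau - 1) = Lam^-1 - 1 by rewrite /tau; field; rewrite ?Lne ?L1ne.
have cLp : 0 <= Lam - Lam^-1 by rewrite subr_ge0.
have sb : forall i, tau - 1 <= s i <= tau.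
  move=> i; have /andP [h1 h2] := hs i; apply/andP; split.
    by apply: le_trans h1; rewrite /a; case: ifP.
  by apply: le_trans h2 _; rewrite /b; case: ifP.
pose w i := 1 + (Lam - Lam^-1) * s i.
have wb : forall i, Lam^-1 <= w i <= Lam.
  move=> i; have /andP [h1 h2] := sb i; rewrite /w; apply/andP; split.
    have := ler_wpM2l cLp h1; lra.
  have := ler_wpM2l cLp h2; lra.
have wpos : forall i, 0 < w i by move=> i; have /andP [h1 _] := wb i; apply: lt_le_trans h1.
pose ebar i := (1 + w i * r i)^-1.
have hcon : forall j, Pn (fun i => G i 0 j * (Z i)%:R / ebar i)
                    = Pn (fun i => G i 0 j * (Z i)%:R / eh i).
  move=> j.
  have pt : forall i, G i 0 j * (Z i)%:R / ebar i
     = G i 0 j * (Z i)%:R / eh i + (Lam - Lam^-1) * (s i *: v i) 0 j.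
    move=> i; have ehne : eh i != 0 by rewrite gt_eqF.
    by rewrite /ebar invrK /w /v !mxE /r /z; field; rewrite ehne Lne.
  by rewrite (@Pn_ext _ _ _ _ pt) PnD PnZ (@Pn_sum0 _ _ _ (sum0 j)) mulr0 addr0.
exists ebar.
  split => //.
  move=> i; rewrite /En.
  have ehne : eh i != 0 by rewrite gt_eqF.
  have eh1ne : 1 - eh i != 0 by rewrite gt_eqF // subr_gt0.
  have wne : w i != 0 by rewrite gt_eqF.
  have : odds (ebar i) / odds (eh i) = (w i)^-1.
    rewrite /odds /ebar /r; field.
    have p1 : 0 < w i * (1 - eh i) by rewrite mulr_gt0 // subr_gt0.
    have -> : eh i + w i * (1 - eh i) - eh i = w i * (1 - eh i) by ring.
    by rewrite wne eh1ne ehne /= !gt_eqF // addr_gt0.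
  move=> ->; have /andP [h1 h2] := wb i; apply/andP; split.
    by rewrite lef_pV2 ?posrE.
  by rewrite -(invrK Lam) lef_pV2 ?posrE // invr_gt0.
rewrite /obj /value; congr (_ * _).
rewrite red (gpart ebar hcon); congr (_ + _); apply: Pn_ext => i.
rewrite /ebar invrK.
have E1 : forall c, c * (1 - eh i) / eh i = c * r i by move=> c; rewrite /r mulrA.
rewrite E1 /w.
have -> : Y i - dotk ghat (g (X i)) = u i by [].
have /andP [h1 h2] := hs i.
have [un|up|u0] := ltgtP (u i) 0.
- have -> : s i = tau - 1.
    apply/eqP; rewrite eq_le; apply/andP; split.
      by move: h2; rewrite /b un.
    by move: h1; rewrite /a (lt_gtF un).
  by rewrite ltr0_sgz // exprN1 cL2; congr (_ * (1 + _ * _)); lra.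
- have -> : s i = tau.
    apply/eqP; rewrite eq_le; apply/andP; split.
      by move: h2; rewrite /b (lt_gtF up).
    by move: h1; rewrite /a up.
  by rewrite gtr0_sgz // expr1z cL1; congr (_ * (1 + _ * _)); lra.
- by rewrite u0 !mul0r.
Qed.
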